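(* Let $\{A^i\}_{i=1}^N$ and $\{\tilde A^i\}_{i=1}^N$ be injective tuples of complex $n\times n$ matrices (not necessarily in canonical form). The following are equivalent: (i) for every even $L\in2\mathbb N$ there exists $\alpha_L\in\mathbb R$ with $\mathrm{tr}[A^{i_1}\cdots A^{i_L}]=e^{i\alpha_L}\mathrm{tr}[\tilde A^{i_1}\cdots\tilde A^{i_L}]$ for all $i_1,\dots,i_L$; (ii) there exist an invertible matrix $M\in\mathrm{GL}_n(\mathbb C)$ and $z\in\mathrm U(1)$ with $A^i=zM^{-1}\tilde A^iM$ for all $i$. Here $z$ is unique and $M$ is unique up to multiplication by a nonzero complex number. The same equivalence holds when $L$ in (i) ranges over odd integers $L\in2\mathbb N+1$ instead.
   Context: A tuple $\{A^i\}_{i=1}^N$ of complex $n\times n$ matrices is injective if there is a fixed $l\in\mathbb N$ such that the products $A^{i_1}\cdots A^{i_l}$ over all $(i_1,\dots,i_l)\in\{1,\dots,N\}^l$ span $\mathrm M_n(\mathbb C)$. It is in canonical form if $\sum_iA^iA^{i\dagger}=1_n$. *)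

(* Defs.v *)
From HB Require Import structures.
From mathcomp Require Import all_boot all_order all_algebra.
From mathcomp Require Import all_classical all_reals.
From mathcomp Require Import trigo.
From mathcomp Require Import complex.
Set Implicit Arguments. Unset Strict Implicit. Unset Printing Implicit Defensive.
Import Order.TTheory GRing.Theory Num.Theory.
Local Open Scope ring_scope.

Definition word_prod (C : pzRingType) (n N l : nat)
  (A : 'I_N -> 'M[C]_n) (w : {ffun 'I_l -> 'I_N}) : 'M[C]_n :=
  \big[mulmx/1%:M]_(k < l) A (w k).

Definition injective_tuple (C : pzRingType) (n N : nat) (A : 'I_N -> 'M[C]_n) : Prop :=
  exists l : nat, (0 < l)%N /\
    forall X : 'M[C]_n, exists c : {ffun 'I_l -> 'I_N} -> C,
      X = \sum_(w : {ffun 'I_l -> 'I_N}) c w *: word_prod A w.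

Definition expi (R : realType) (a : R) : R[i] := (cos a +i* sin a)%C.

(* Main.v *)
Require Import Defs.
From HB Require Import structures.
From mathcomp Require Import all_boot all_order all_algebra.
From mathcomp Require Import all_classical all_reals.
From mathcomp Require Import trigo.
From mathcomp Require Import complex.
From mathcomp Require Import lra.
Set Implicit Arguments. Unset Strict Implicit. Unset Printing Implicit Defensive.
Import Order.TTheory GRing.Theory Num.Theory.
Local Open Scope ring_scope.

Section Words.
Variables (F : fieldType) (n N : nat).
Local Notation word l := {ffun 'I_l -> 'I_N}.
Local Notation mx := 'M[F]_n.

Definition wp (B : 'I_N -> mx) l (w : word l) : mx := \prod_(k < l) B (w k).

Definition wcat a b (w : word a) (v : word b) : word (a + b) :=
  [ffun k => match fintype.split k with inl i => w i | inr j => v j end].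

Definition w1 (i : 'I_N) : word 1 := [ffun _ => i].

Lemma wp_cat B a b (w : word a) (v : word b) :
  wp B (wcat w v) = wp B w *m wp B v.
Proof.
rewrite /wp big_split_ord /=; congr (_ * _); apply: eq_bigr => k _; rewrite ffunE.
  by have /= -> := unsplitK (inl _ k).
by have /= -> := unsplitK (inr _ k).
Qed.

Lemma wp1 B i : wp B (w1 i) = B i.
Proof. by rewrite /wp big_ord1 ffunE. Qed.

Definition wsp l B := forall X : mx, exists c : word l -> F, X = \sum_w c w *: wp B w.

Lemma regroup (I : finType) l (g : I -> word l) (d : I -> F) B :
  exists c : word l -> F, \sum_i d i *: wp B (g i) = \sum_w c w *: wp B w.
Proof.
exists (fun w => \sum_(i | g i == w) d i).
rewrite (partition_big g xpredT) //=; apply: eq_bigr => w _.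
rewrite scaler_suml; apply: eq_bigr => i /eqP -> //.
Qed.

Lemma sp_succ l B : (0 < l)%N -> wsp l B -> wsp l.+1 B.
Proof.
move=> l0 Hs.
have Hsub : forall w : word l, ((wp B w)^T <= \sum_i (B i)^T)%MS.
  case: l l0 Hs => // l _ _ w; rewrite /wp big_ord_recl.
  rewrite -[_ * _]/(mulmx _ _) trmx_mul.
  apply: submx_trans (submxMl _ _) _.
  exact: (sumsmx_sup (w ord0)).
have H1 : ((1%:M : mx) <= \sum_i (B i)^T)%MS.
  have [c Hc] := Hs 1%:M.
  rewrite -trmx1 Hc linear_sum /=; apply/summx_sub => w _.
  by rewrite linearZ /=; apply/scalemx_sub/Hsub.
have [u Hu] := sub_sumsmxP H1.
move=> X.
have Hx : X = \sum_i B i *m ((u i)^T *m X).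
  rewrite -{1}[X]mul1mx -{1}trmx1 Hu linear_sum /= mulmx_suml.
  by apply: eq_bigr => i _; rewrite trmx_mul trmxK mulmxA.
have [cc Hcc] := choice (fun i => Hs ((u i)^T *m X)).
have [c Hc] := regroup (fun p : 'I_N * word l => wcat (w1 p.1) p.2)
   (fun p => cc p.1 p.2) B.
exists c; rewrite -Hc Hx.
rewrite -(pair_bigA _ (fun i w => cc i w *: wp B (wcat (w1 i) w))) /=.
apply: eq_bigr => i _.
rewrite Hcc mulmx_sumr; apply: eq_bigr => w _.
by rewrite wp_cat wp1 scalemxAr.
Qed.

Lemma sp_le l m B : (0 < l)%N -> (l <= m)%N -> wsp l B -> wsp m B.
Proof.
move=> l0; elim: m => [|m IH]; first by rewrite leqn0 => /eqP E; rewrite E in l0.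
rewrite leq_eqVlt => /orP [/eqP <- //|lm] Hs.
by apply: sp_succ; [exact: (leq_trans l0 lm) | exact: IH].
Qed.

Lemma mulmx_delta_entry (X : mx) (a b p q : 'I_n) :
  (X *m delta_mx a b) p q = X p a * (q == b)%:R.
Proof.
rewrite mxE (bigD1 a) //= big1 => [|k /negPf nk]; rewrite !mxE ?eqxx ?nk //.
by rewrite addr0.
by rewrite mulr0.
Qed.

Lemma delta_mulmx_entry (X : mx) (a b p q : 'I_n) :
  (delta_mx a b *m X) p q = (p == a)%:R * X b q.
Proof.
rewrite mxE (bigD1 b) //= big1 => [|k /negPf nk]; rewrite !mxE ?eqxx ?nk ?andbT //.
by rewrite addr0.
by rewrite andbF mul0r.
Qed.

Lemma tr_nondeg (X : mx) : (forall Y, \tr (X *m Y) = 0) -> X = 0.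
Proof.
move=> H; apply/matrixP => i j; rewrite mxE; have := H (delta_mx j i).
rewrite /mxtrace (bigD1 i) //= big1 => [|k /negPf nk];
  rewrite mulmx_delta_entry ?nk ?eqxx ?mulr1 ?mulr0 ?addr0 //.
Qed.

Lemma tr_span l B (X : mx) : wsp l B -> (forall w : word l, \tr (X *m wp B w) = 0) -> X = 0.
Proof.
move=> Hs H; apply: tr_nondeg => Y; have [c ->] := Hs Y.
rewrite mulmx_sumr linear_sum big1 // => w _ /=.
by rewrite -scalemxAr mxtraceZ H mulr0.
Qed.

Lemma mul_span l B (X : mx) : wsp l B -> (forall w : word l, X *m wp B w = 0) -> X = 0.
Proof.
move=> Hs H; rewrite -[X]mulmx1; have [c ->] := Hs 1%:M.
by rewrite mulmx_sumr big1 // => w _; rewrite -scalemxAr H scaler0.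
Qed.

Definition WDprop a (A B : 'I_N -> mx) := forall (I : finType) (g : I -> word a) (d : I -> F),
  \sum_i d i *: wp B (g i) = 0 -> \sum_i d i *: wp A (g i) = 0.

Lemma WD_of_trace a c A B (kappa : F) : wsp c A ->
  (forall u : word (a + c), \tr (wp A u) = kappa * \tr (wp B u)) -> WDprop a A B.
Proof.
move=> Hs Ht I g d H0; apply: (tr_span Hs) => v.
rewrite mulmx_suml linear_sum /=.
transitivity (kappa * \tr ((\sum_i d i *: wp B (g i)) *m wp B v)); last first.
  by rewrite H0 mul0mx linear0 mulr0.
rewrite mulmx_suml linear_sum mulr_sumr; apply: eq_bigr => i _ /=.
by rewrite -!scalemxAl !mxtraceZ -!wp_cat Ht mulrCA.
Qed.

Lemma WD_rev a c A B (kappa : F) : kappa != 0 -> wsp c B ->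
  (forall u : word (a + c), \tr (wp A u) = kappa * \tr (wp B u)) -> WDprop a B A.
Proof.
move=> k0 Hs Ht; apply: (WD_of_trace (kappa := kappa^-1)) Hs _ => u.
by rewrite Ht mulrA mulVf // mul1r.
Qed.

Lemma WD2 a A B : WDprop a A B -> forall (I J : finType) (g : I -> word a) (h : J -> word a)
  (d : I -> F) (e : J -> F),
  \sum_i d i *: wp B (g i) = \sum_j e j *: wp B (h j) ->
  \sum_i d i *: wp A (g i) = \sum_j e j *: wp A (h j).
Proof.
move=> H I J g h d e E; apply/eqP; rewrite -subr_eq0; apply/eqP.
have sN : forall M : 'I_N -> mx,
    \sum_j (- e j) *: wp M (h j) = - \sum_j e j *: wp M (h j).
  by move=> M; rewrite -sumrN; apply: eq_bigr => j _; rewrite scaleNr.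
have := H (I + J)%type (fun k => match k with inl i => g i | inr j => h j end)
  (fun k => match k with inl i => d i | inr j => - e j end).
by rewrite !big_sumType /= !sN E subrr; apply.
Qed.

Definition wcoef a B (X : mx) : word a -> F :=
  match pselect (exists c : word a -> F, X = \sum_w c w *: wp B w) with
  | left e => proj1_sig (cid e) | right _ => fun _ => 0 end.
Arguments wcoef : clear implicits.

Lemma coefP a B X : wsp a B -> X = \sum_w wcoef a B X w *: wp B w.
Proof.
move=> Hs; rewrite /wcoef; case: pselect => [e|ne]; first by case: (cid e).
by case: ne; exact: Hs.
Qed.

Definition wphi a A B X := \sum_w wcoef a B X w *: wp A w.

Lemma phiP a A B : wsp a B -> WDprop a A B ->
  forall (I : finType) (g : I -> word a) (d : I -> F) X,
  X = \sum_i d i *: wp B (g i) -> wphi a A B X = \sum_i d i *: wp A (g i).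
Proof.
move=> Hs Hw I g d X HX; rewrite /wphi.
by apply: (WD2 Hw); rewrite -coefP.
Qed.

Lemma phi_w a A B (w : word a) : wsp a B -> WDprop a A B -> wphi a A B (wp B w) = wp A w.
Proof.
move=> Hs Hw.
rewrite (@phiP _ _ _ Hs Hw _ (fun _ : 'I_1 => w) (fun _ => 1)) ?big_ord1 ?scale1r //.
Qed.

Lemma phi_comb a A B (I : finType) (c : I -> F) (X : I -> mx) : wsp a B -> WDprop a A B ->
  wphi a A B (\sum_i c i *: X i) = \sum_i c i *: wphi a A B (X i).
Proof.
move=> Hs Hw.
rewrite (@phiP _ _ _ Hs Hw _ (fun p : I * word a => p.2) (fun p => c p.1 * wcoef a B (X p.1) p.2)).
  rewrite /wphi -(pair_bigA _ (fun i w => (c i * wcoef a B (X i) w) *: wp A w)) /=.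
  apply: eq_bigr => i _.
  by rewrite scaler_sumr; apply: eq_bigr => w _; rewrite scalerA.
rewrite -(pair_bigA _ (fun i w => (c i * wcoef a B (X i) w) *: wp B w)) /=.
apply: eq_bigr => i _.
rewrite {1}(coefP (X i) Hs) scaler_sumr; apply: eq_bigr => w _.
by rewrite scalerA.
Qed.

Lemma prod_sums (Ax : 'I_N -> mx) a b (x : word a -> F) (y : word b -> F) :
  (\sum_w x w *: wp Ax w) *m (\sum_v y v *: wp Ax v) =
  \sum_(p : word a * word b) (x p.1 * y p.2) *: wp Ax (wcat p.1 p.2).
Proof.
rewrite mulmx_suml -(pair_bigA _ (fun w v => (x w * y v) *: wp Ax (wcat w v))); apply: eq_bigr => w _ /=.
rewrite mulmx_sumr; apply: eq_bigr => v _.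
by rewrite -scalemxAl -scalemxAr scalerA wp_cat.
Qed.

Lemma phi_mul a b A B X Y : wsp a B -> wsp b B -> wsp (a + b) B -> WDprop (a + b) A B ->
  wphi (a + b) A B (X *m Y) = wphi a A B X *m wphi b A B Y.
Proof.
move=> Ha Hb Hab Hw; rewrite [wphi a _ _ X]/wphi [wphi b _ _ Y]/wphi prod_sums.
apply: (phiP Hab Hw).
by rewrite {1}(coefP X Ha) {1}(coefP Y Hb) prod_sums.
Qed.

Lemma phi_surj a A B : wsp a A -> wsp a B -> WDprop a A B ->
  forall Y, exists X, wphi a A B X = Y.
Proof.
move=> HA HB Hw Y; have [e He] := HA Y; exists (\sum_w e w *: wp B w).
by rewrite (@phiP _ _ _ HB Hw _ (fun w : word a => w) e _ (erefl _)) -He.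
Qed.

Lemma phi_inj a A B X : wsp a B -> WDprop a B A -> wphi a A B X = 0 -> X = 0.
Proof.
move=> Hs Hr H0; rewrite (coefP X Hs).
exact: (Hr _ (fun w : word a => w) (wcoef a B X) H0).
Qed.

Lemma comm_scalar (U : mx) (i0 : 'I_n) : (forall X : mx, U *m X = X *m U) -> U = (U i0 i0)%:M.
Proof.
move=> H; have E := fun X p q => congr1 (fun M : mx => M p q) (H X).
apply/matrixP => p q; rewrite mxE.
case: (eqVneq p q) => [<-|npq].
  move: (E (delta_mx p i0) p i0); rewrite mulmx_delta_entry delta_mulmx_entry !eqxx.
  by rewrite mulr1 mul1r mulr1n.
move: (E (delta_mx q q) p q); rewrite mulmx_delta_entry delta_mulmx_entry eqxx (negPf npq).
by rewrite mulr1 mul0r mulr0n.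
Qed.

Lemma rv_reach (x y : 'rV[F]_n) : x != 0 -> exists Y : mx, x *m Y = y.
Proof.
move=> x0.
have : ~~ [forall k, x 0 k == 0].
  apply: contra x0 => /forallP H; apply/eqP/matrixP => i k.
  by rewrite (ord1 i) (eqP (H k)) mxE.
rewrite negb_forall => /existsP [k xk].
exists ((x 0 k)^-1 *: (delta_mx k 0 *m y)).
rewrite -scalemxAr mulmxA [x *m delta_mx k 0]mx11_scalar mul_scalar_mx scalerA.
suff -> : (x *m (delta_mx k 0 : 'M_(n,1))) 0 0 = x 0 k by rewrite mulVf // scale1r.
rewrite mxE (bigD1 k) //= big1 => [|j /negPf nj]; rewrite mxE ?eqxx ?nj //.
  by rewrite mulr1 addr0.
by rewrite mulr0.
Qed.

Lemma skolem (f : mx -> mx) (u : F) (i0 : 'I_n) :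
  (forall (c : 'I_n -> F) (X : 'I_n -> mx), f (\sum_i c i *: X i) = \sum_i c i *: f (X i)) ->
  (forall X Y, f X *m f Y = u *: f (X *m Y)) ->
  (forall Y, exists X, f X = Y) ->
  f (delta_mx i0 i0) != 0 ->
  exists M : mx, M \in unitmx /\ forall X, f X = u *: (M *m X *m invmx M).
Proof.
move=> Hlin Hmul Hsurj F0nz.
pose NN (Y : mx) := \sum_j f (delta_mx j i0) *m Y *m delta_mx i0 j.
have L1 : forall (X : mx) j, X *m delta_mx j i0 = \sum_i X i j *: delta_mx i i0.
  move=> X j; apply/matrixP => p q; rewrite mulmx_delta_entry summxE (bigD1 p) //=.
  rewrite big1 => [|i /negPf ni]; rewrite !mxE ?eqxx ?ni //=; first by rewrite addr0.
  by rewrite eq_sym ni mulr0.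
have L2 : forall (X : mx) i, delta_mx i0 i *m X = \sum_j X i j *: delta_mx i0 j.
  move=> X i; apply/matrixP => p q; rewrite delta_mulmx_entry summxE (bigD1 q) //=.
  rewrite big1 => [|j /negPf nj]; rewrite !mxE ?eqxx ?nj ?andbT //=.
    by rewrite addr0 mulrC.
  by rewrite [q == j]eq_sym nj andbF mulr0.
have C1 : forall Y X, f X *m NN Y = u *: (NN Y *m X).
  move=> Y X; rewrite /NN mulmx_sumr.
  transitivity (\sum_j u *: (f (X *m delta_mx j i0) *m Y *m delta_mx i0 j)).
    by apply: eq_bigr => j _; rewrite !mulmxA Hmul -!scalemxAl.
  rewrite -scaler_sumr mulmx_suml; congr (_ *: _).
  transitivity (\sum_j \sum_i X i j *: (f (delta_mx i i0) *m Y *m delta_mx i0 j)).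
    apply: eq_bigr => j _; rewrite L1 Hlin !mulmx_suml; apply: eq_bigr => i _.
    by rewrite -!scalemxAl.
  rewrite exchange_big /=; apply: eq_bigr => i _.
  rewrite -mulmxA L2 !mulmx_sumr; apply: eq_bigr => j _.
  by rewrite -!scalemxAr.
have : ~~ [forall p, forall q, f (delta_mx i0 i0) p q == 0].
  apply: contra F0nz => /forallP H; apply/eqP/matrixP => p q.
  by move/forallP: (H p) => /(_ q) /eqP ->; rewrite mxE.
rewrite negb_forall => /existsP [p]; rewrite negb_forall => /existsP [q Hpq].
pose NM := NN (delta_mx q i0).
have Nnz : NM != 0.
  apply/eqP => H0.
  have : (NM *m delta_mx i0 i0) p i0 = f (delta_mx i0 i0) p q.
    rewrite /NM /NN mulmx_suml (bigD1 i0) //= big1 => [|j nj].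
      by rewrite addr0 -!mulmxA !mul_delta_mx mulmx_delta_entry eqxx mulr1.
    by rewrite -mulmxA mul_delta_mx_0 ?mulmx0 // eq_sym.
  by rewrite H0 mul0mx mxE => /esym/eqP; rewrite (negPf Hpq).
have Nu : NM \in unitmx.
  rewrite -row_free_unit; apply/negPn/negP => nf.
  have Kn : kermx NM != 0.
    apply: contra nf => /eqP K0; have := mxrank_ker NM; rewrite K0 mxrank0 => /esym/eqP.
    by rewrite subn_eq0 => Hle; rewrite /row_free eqn_leq rank_leq_row Hle.
  have [x /sub_kermxP xN x0] := rowV0Pn Kn.
  apply: (negP Nnz); apply/eqP/row_matrixP => i; rewrite row0 rowE.
  have [Y HY] := rv_reach (delta_mx 0 i) x0.
  have [X HX] := Hsurj Y.
  by rewrite -HY -HX -mulmxA C1 -scalemxAr mulmxA xN mul0mx scaler0.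
exists NM; split => // X.
by rewrite -[f X](mulmxK Nu) C1 -scalemxAl.
Qed.

Lemma delta_nz (i0 : 'I_n) : (delta_mx i0 i0 : mx) != 0.
Proof.
apply/eqP => /matrixP/(_ i0 i0); rewrite !mxE !eqxx /= => /eqP; by rewrite oner_eq0.
Qed.

Lemma one_nz (i0 : 'I_n) : (1%:M : mx) != 0.
Proof.
apply/eqP => /matrixP/(_ i0 i0); rewrite !mxE !eqxx /= => /eqP; by rewrite oner_eq0.
Qed.

Theorem gen_main (A B : 'I_N -> mx) (L0 : nat) (i0 : 'I_n) : (0 < L0)%N ->
  (forall m, (L0 <= m)%N -> [/\ wsp m A, wsp m B, WDprop m A B & WDprop m B A]) ->
  exists (M : mx) (z : F), M \in unitmx /\ forall i, A i = z *: (M *m B i *m invmx M).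
Proof.
move=> L0p H.
set a := L0; set b := L0.+1.
have [spaA spaB WDa WDar] := H a (leqnn _).
have [spbA spbB WDb _] := H b (leqnSn _).
have [_ spaaB WDaa _] := H (a + a) (leq_addr _ _).
have [_ spabB WDab _] := H (a + b) (leq_addr _ _).
have [_ spbaB WDba _] := H (b + a) (leq_addl _ _).
pose pa := wphi a A B.
pose U := pa 1%:M.
have Haa : forall X Y, wphi (a + a) A B (X *m Y) = pa X *m pa Y.
  by move=> X Y; apply: phi_mul.
have Ucomm : forall Y, U *m Y = Y *m U.
  move=> Y; have [X <-] := phi_surj spaA spaB WDa Y.
  by rewrite /U -!Haa mul1mx mulmx1.
set u := U i0 i0.
have Ue : pa 1%:M = u%:M by apply: comm_scalar.
have Hmul : forall X Y, pa X *m pa Y = u *: pa (X *m Y).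
  move=> X Y; rewrite -Haa.
  transitivity (wphi (a + a) A B (1%:M *m (X *m Y))); first by rewrite mul1mx.
  by rewrite Haa Ue mul_scalar_mx.
have F0nz : pa (delta_mx i0 i0) != 0.
  by apply/eqP => /(phi_inj spaB WDar) /eqP; rewrite (negPf (delta_nz i0)).
have Hlin : forall (c : 'I_n -> F) (X : 'I_n -> mx), pa (\sum_i c i *: X i) = \sum_i c i *: pa (X i).
  by move=> c X; apply: phi_comb.
have [NM [Nu HN]] := skolem Hlin Hmul (phi_surj spaA spaB WDa) F0nz.
have u0 : u != 0.
  apply/eqP => u0; have [X HX] := phi_surj spaA spaB WDa 1%:M.
  have := Hmul X X; rewrite /pa HX mul1mx u0 scale0r => /eqP; by rewrite (negPf (one_nz i0)).
pose pb := wphi b A B.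
pose V := pb 1%:M.
have Hab : forall X Y, wphi (a + b) A B (X *m Y) = pa X *m pb Y.
  by move=> X Y; apply: phi_mul.
have Hba : forall X Y, wphi (a + b) A B (Y *m X) = pb Y *m pa X.
  by move=> X Y; rewrite addnC; apply: phi_mul.
have Vcomm : forall Y, V *m Y = Y *m V.
  move=> Y; have [X <-] := phi_surj spaA spaB WDa Y.
  by rewrite /V -Hba -Hab mul1mx mulmx1.
set v := V i0 i0.
have Ve : pb 1%:M = v%:M by apply: comm_scalar.
pose z := v / u.
have Hb : forall Y, pb Y = z *: pa Y.
  move=> Y; apply: (scalerI u0).
  rewrite -[u *: pb Y]mul_scalar_mx -Ue -Hab mul1mx.
  transitivity (wphi (a + b) A B (1%:M *m Y)); first by rewrite mul1mx.
  by rewrite Hba Ve mul_scalar_mx scalerA /z mulrCA divff // mulr1.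
exists NM, z; split => // i.
apply/eqP; rewrite -subr_eq0; apply/eqP; apply: (mul_span spaA) => w.
rewrite mulmxBl; apply/eqP; rewrite subr_eq0; apply/eqP.
rewrite -[A i]wp1 -wp_cat -(phi_w (wcat (w1 i) w) spbB WDb) -/pb Hb wp_cat wp1 HN.
rewrite -(phi_w w spaB WDa) -/pa HN -!scalemxAl -scalemxAr scalerA.
rewrite scalerA; congr (_ *: _).
by rewrite !mulmxA mulmxKV.
Qed.

Lemma prod_conj (A B : 'I_N -> mx) (M : mx) (z : F) : M \in unitmx ->
  (forall i, A i = z *: (invmx M *m B i *m M)) ->
  forall l (f : 'I_l -> 'I_N),
  \prod_(k < l) A (f k) = z ^+ l *: (invmx M *m \prod_(k < l) B (f k) *m M).
Proof.
move=> Mu HA; elim => [|l IH] f.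
  by rewrite !big_ord0 expr0 scale1r -[_ *m 1]/(mulmx _ 1%:M) mulmx1 mulVmx.
rewrite !big_ord_recr /= -![_ * _]/(mulmx _ _) IH HA.
rewrite -scalemxAl -scalemxAr scalerA exprSr; congr (_ *: _).
by rewrite !mulmxA mulmxK.
Qed.

Lemma wp_conj (A B : 'I_N -> mx) (M : mx) (z : F) : M \in unitmx ->
  (forall i, A i = z *: (invmx M *m B i *m M)) ->
  forall l (w : word l), wp A w = z ^+ l *: (invmx M *m wp B w *m M).
Proof. by move=> Mu HA l w; apply: prod_conj. Qed.

Lemma tr_conj (M X : mx) (z : F) : M \in unitmx ->
  \tr (z *: (invmx M *m X *m M)) = z * \tr X.
Proof. by move=> Mu; rewrite mxtraceZ mxtrace_mulC mulmxA mulmxV // mul1mx. Qed.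

Lemma conj_sum l (B : 'I_N -> mx) (M : mx) (z : F) (c : word l -> F) :
  z *: (invmx M *m (\sum_w c w *: wp B w) *m M) =
  \sum_w c w *: (z *: (invmx M *m wp B w *m M)).
Proof.
rewrite mulmx_sumr mulmx_suml scaler_sumr; apply: eq_bigr => w _.
by rewrite -scalemxAr -scalemxAl !scalerA mulrC.
Qed.

Lemma uniq_gen (B : 'I_N -> mx) (L0 : nat) (i0 : 'I_n) (M M' : mx) (z z' : F) :
  (0 < L0)%N -> wsp L0 B -> M \in unitmx -> M' \in unitmx -> z != 0 ->
  (forall i, z *: (invmx M *m B i *m M) = z' *: (invmx M' *m B i *m M')) ->
  z' = z /\ exists c : F, c != 0 /\ M' = c *: M.
Proof.
move=> L0p Hs Mu M'u z0 Heq.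
have HX : forall m, (L0 <= m)%N -> forall X,
    z ^+ m *: (invmx M *m X *m M) = z' ^+ m *: (invmx M' *m X *m M').
  move=> m Lm X; have Hm := sp_le L0p Lm Hs; have [c ->] := Hm X.
  rewrite !conj_sum; apply: eq_bigr => w _; congr (_ *: _).
  have E1 := wp_conj Mu (fun i => erefl (z *: (invmx M *m B i *m M))) w.
  have E2 := @wp_conj (fun i => z *: (invmx M *m B i *m M)) B M' z' M'u Heq m w.
  by rewrite -E1 E2.
have H1 : forall m, (L0 <= m)%N -> z ^+ m = z' ^+ m.
  move=> m Lm; have := HX m Lm 1%:M.
  rewrite !mulmx1 !mulVmx // => /matrixP/(_ i0 i0); rewrite !mxE eqxx !mulr1n.
  by rewrite !mulr1.
have zz : z' = z.
  have := H1 _ (leqnSn L0); rewrite !exprS (H1 _ (leqnn L0)) => /mulIf -> //.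
  by rewrite -(H1 _ (leqnn L0)) expf_neq0.
split => //.
have HY : forall X, invmx M *m X *m M = invmx M' *m X *m M'.
  move=> X; have := HX L0 (leqnn _) X; rewrite zz; apply: scalerI.
  by rewrite expf_neq0.
pose Q := M' *m invmx M.
have Qc : forall X, Q *m X = X *m Q.
  move=> X; rewrite /Q.
  transitivity (M' *m (invmx M *m X *m M) *m invmx M).
    by rewrite !mulmxA mulmxK.
  by rewrite HY !mulmxA mulmxV // mul1mx.
have Qe := comm_scalar i0 Qc.
have EM : M' = Q *m M by rewrite /Q mulmxKV.
move: (Q i0 i0) Qe => q Qe.
exists q; rewrite EM Qe mul_scalar_mx; split => //.
apply/eqP => q0; move: M'u; rewrite EM Qe q0 mul_scalar_mx scale0r => /mulmxV.
by rewrite mul0mx => /esym/eqP; rewrite (negPf (one_nz i0)).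
Qed.

End Words.

Lemma norm_expi (R : realType) (a : R) : `|expi a| = 1.
Proof. by rewrite /expi normc_def /= cos2Dsin2 sqrtr1. Qed.

Lemma expi_nz (R : realType) (a : R) : expi a != 0.
Proof. by rewrite -normr_eq0 norm_expi oner_eq0. Qed.

Lemma polar_expi (R : realType) (c : R[i]) : `|c| = 1 -> exists a : R, expi a = c.
Proof.
case: c => x y; rewrite normc_def /= => H.
have Hs : Num.sqrt (x ^+ 2 + y ^+ 2) = 1 by move: H => [].
have s1 : x ^+ 2 + y ^+ 2 = 1.
  by rewrite -[LHS]sqr_sqrtr ?Hs ?expr1n // addr_ge0 // sqr_ge0.
have hx : -1 <= x <= 1 by apply/andP; split; nra.
have [_ cx] := acos_def hx.
have e : 1 - x ^+ 2 = y ^+ 2 by rewrite -s1 addrAC subrr add0r.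
exists (if 0 <= y then acos x else - acos x).
rewrite /expi; case: ifP => y0.
  by rewrite cx sin_acos // e sqrtr_sqr ger0_norm.
rewrite cosN sinN cx sin_acos // e sqrtr_sqr ltr0_norm ?opprK //.
by rewrite ltNge y0.
Qed.

Lemma word_prodE (C : pzRingType) n N (A : 'I_N -> 'M[C]_n) l (w : {ffun 'I_l -> 'I_N}) :
  word_prod A w = \prod_(k < l) A (w k).
Proof. by []. Qed.

Lemma ii_to_i (R : realType) n N (A At : 'I_N -> 'M[R[i]]_n) (M : 'M[R[i]]_n) (z : R[i]) :
  M \in unitmx -> `|z| = 1 -> (forall i, A i = z *: (invmx M *m At i *m M)) ->
  forall L, exists alpha : R, forall w : {ffun 'I_L -> 'I_N},
    \tr (word_prod A w) = expi alpha * \tr (word_prod At w).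
Proof.
move=> Mu z1 HA L.
have [a Ha] : exists a : R, expi a = z ^+ L by apply: polar_expi; rewrite normrX z1 expr1n.
exists a => w; rewrite !word_prodE.
have := wp_conj Mu HA w; rewrite /wp => ->.
by rewrite tr_conj // Ha.
Qed.

Lemma i_to_ii (R : realType) n N (A At : 'I_N -> 'M[R[i]]_n) (P : nat -> Prop) :
  (0 < n)%N -> injective_tuple A -> injective_tuple At ->
  (forall k, (0 < k)%N -> P k \/ P k.+1) ->
  (forall L, P L -> exists alpha : R, forall w : {ffun 'I_L -> 'I_N},
    \tr (word_prod A w) = expi alpha * \tr (word_prod At w)) ->
  exists (M : 'M[R[i]]_n) (z : R[i]),
      M \in unitmx /\ `|z| = 1 /\
      forall i : 'I_N, A i = z *: (invmx M *m At i *m M).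
Proof.
move=> n0 [l [l0 HlA]] [l' [l0' HlB]] PP Hc.
have spA : wsp l A by exact: HlA.
have spB : wsp l' At by exact: HlB.
pose i0 : 'I_n := Ordinal n0.
pose L0 := maxn l l'.
have L0p : (0 < L0)%N by rewrite leq_max l0.
have spAm : forall m, (L0 <= m)%N -> wsp m A.
  by move=> m Lm; apply: (sp_le l0 _ spA); apply: leq_trans Lm; rewrite leq_maxl.
have spBm : forall m, (L0 <= m)%N -> wsp m At.
  by move=> m Lm; apply: (sp_le l0' _ spB); apply: leq_trans Lm; rewrite leq_maxr.
have trrel : forall L, P L -> exists alpha : R, forall w : {ffun 'I_L -> 'I_N},
    \tr (wp A w) = expi alpha * \tr (wp At w).
  by move=> L PL; have [a Ha] := Hc L PL; exists a => w; exact: (Ha w).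
have HWD : forall m, (L0 <= m)%N -> [/\ wsp m A, wsp m At, WDprop m A At & WDprop m At A].
  move=> m Lm; split; [exact: spAm | exact: spBm | |].
  - have [c [Lc Pc]] : exists c, (L0 <= c)%N /\ P (m + c)%N.
      have [H|H] := PP (m + L0)%N (leq_trans L0p (leq_addl _ _)).
        by exists L0.
      by exists L0.+1; rewrite addnS.
    have [a Ha] := trrel _ Pc.
    exact: (WD_of_trace (spAm c Lc) Ha).
  - have [c [Lc Pc]] : exists c, (L0 <= c)%N /\ P (m + c)%N.
      have [H|H] := PP (m + L0)%N (leq_trans L0p (leq_addl _ _)).
        by exists L0.
      by exists L0.+1; rewrite addnS.
    have [a Ha] := trrel _ Pc.
    exact: (WD_rev (expi_nz a) (spBm c Lc) Ha).
have [NM [z [Nu Hz]]] := gen_main i0 L0p HWD.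
have Hz' : forall i, A i = z *: (invmx (invmx NM) *m At i *m invmx NM).
  by move=> i; rewrite invmxK.
exists (invmx NM), z; split; first by rewrite unitmx_inv.
split => //.
have [L [LL PL]] : exists L, (L0 <= L)%N /\ P L.
  by have [H|H] := PP L0 L0p; [exists L0 | exists L0.+1; rewrite leqnSn].
have Lp : (0 < L)%N := leq_trans L0p LL.
have : ~~ [forall w : {ffun 'I_L -> 'I_N}, \tr (wp At w) == 0].
  apply/negP => /forallP H; move: (@one_nz R[i] n i0).
  rewrite (tr_span (X := 1%:M) (spBm L LL)) ?eqxx // => w; rewrite mul1mx; exact/eqP/H.
rewrite negb_forall => /existsP [w tw].
have [a Ha] := trrel L PL.
have := Ha w; rewrite (wp_conj _ Hz') ?unitmx_inv // tr_conj ?unitmx_inv // => /mulIf.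
move=> /(_ tw) zL.
have : `|z| ^+ L = 1 by rewrite -normrX zL norm_expi.
by move/eqP; rewrite pexpr_eq1 // => /eqP.
Qed.

Theorem mainTheorem6 (R : realType) (n N : nat) (A At : 'I_N -> 'M[R[i]]_n) :
  (0 < n)%N ->
  injective_tuple A -> injective_tuple At ->
  let cond_ii :=
    exists (M : 'M[R[i]]_n) (z : R[i]),
      M \in unitmx /\ `|z| = 1 /\
      forall i : 'I_N, A i = z *: (invmx M *m At i *m M) in
  let cond_i (P : nat -> Prop) :=
    forall L : nat, P L -> exists alpha : R,
      forall w : {ffun 'I_L -> 'I_N},
        \tr (word_prod A w) = expi alpha * \tr (word_prod At w) in
  ((cond_i (fun L => (0 < L)%N /\ ~~ odd L)) <-> cond_ii) /\
  ((cond_i (fun L => odd L)) <-> cond_ii) /\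
  (forall (M M' : 'M[R[i]]_n) (z z' : R[i]),
      M \in unitmx -> `|z| = 1 ->
      (forall i : 'I_N, A i = z *: (invmx M *m At i *m M)) ->
      M' \in unitmx -> `|z'| = 1 ->
      (forall i : 'I_N, A i = z' *: (invmx M' *m At i *m M')) ->
      z' = z /\ exists c : R[i], c != 0 /\ M' = c *: M).
Proof.
move=> n0 injA injB cond_ii cond_i.
have iiI : forall P, cond_ii -> cond_i P.
  move=> P [M [z [Mu [z1 HA]]]] L _; exact: (ii_to_i Mu z1 HA).
split; [|split].
- split; last exact: iiI.
  apply: i_to_ii => // k k0.
  by case: (boolP (odd k)) => ok; [right; rewrite /= ok | left].
- split; last exact: iiI.
  apply: i_to_ii => // k k0.
  by case: (boolP (odd k)) => ok; [left | right; rewrite /= ok].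
move=> M M' z z' Mu z1 HA M'u z'1 HA'.
have [l [l0 HlB]] := injB.
have spB : wsp l At by exact: HlB.
have z0 : z != 0 by rewrite -normr_eq0 z1 oner_eq0.
apply: (uniq_gen (Ordinal n0) l0 spB Mu M'u z0) => i.
by rewrite -HA -HA'.
Qed.
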